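(* Let $m\ge 1$ and let $(\phi_n)_{n\ge 0}$ be vectors in $\mathbb{R}^m$ such that the rank-one symmetric matrices $A_n=\phi_n\phi_n^\top$ satisfy $0\le A_n\le I$. Define the transition matrices $\Phi(i,i)=I$ and $\Phi(n+1,i)=(I-A_n)\Phi(n,i)$ for $n\ge i$. Let $(\mu_j)_{j\ge0}$ be nonnegative real numbers (weights), and for integers $0\le k<N$ set $$S_{Nk}=\sum_{j=k}^{N-1}\mu_jA_j,\qquad B_{jk}=\sum_{l=k}^{j-1}(\phi_j^\top\phi_l)^2 .$$ Then, provided the denominator below is nonzero, $$\|\Phi(N,k)\|^2\le 1-\frac{\lambda_{\min}(S_{Nk})}{\left(\sqrt{\max_{k\le j<N}\mu_j}+\sqrt{\sum_{j=k}^{N-1}\mu_jB_{jk}}\right)^2}.$$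
   Context: $\|\cdot\|$ denotes the spectral norm of a matrix, $\lambda_{\min}$ the smallest eigenvalue of a symmetric matrix, and $0\le A\le I$ is in the positive semidefinite (Loewner) order. *)

(* Defs.v *)
From HB Require Import structures.
From mathcomp Require Import all_boot all_order all_algebra.
From mathcomp Require Import boolp classical_sets reals.
Set Implicit Arguments. Unset Strict Implicit. Unset Printing Implicit Defensive.
Import Order.TTheory GRing.Theory Num.Theory.
Local Open Scope ring_scope.
Local Open Scope classical_set_scope.

Section Defs.
Variable R : realType.

Definition vnorm2 m (x : 'cV[R]_m) : R := Num.sqrt (\sum_i x i 0 ^+ 2).

Definition specnorm m n (M : 'M[R]_(m, n)) : R :=
  sup [set vnorm2 (M *m x) | x in [set x : 'cV[R]_n | vnorm2 x = 1]].

Definition lambda_min m (S : 'M[R]_m) : R :=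
  inf [set a : R | eigenvalue S a].

Definition psd m (M : 'M[R]_m) : Prop :=
  forall x : 'cV[R]_m, 0 <= (x^T *m M *m x) 0 0.

Definition Amat m (phi : nat -> 'cV[R]_m) (n : nat) : 'M[R]_m :=
  phi n *m (phi n)^T.

(* Phi_rec d i = Phi(i + d, i) *)
Fixpoint Phi_rec m (phi : nat -> 'cV[R]_m) (d i : nat) : 'M[R]_m :=
  match d with
  | 0 => 1%:M
  | d'.+1 => (1%:M - Amat phi (i + d')) *m Phi_rec phi d' i
  end.

Definition Phi m (phi : nat -> 'cV[R]_m) (n i : nat) : 'M[R]_m :=
  Phi_rec phi (n - i) i.

Definition Smat m (phi : nat -> 'cV[R]_m) (mu : nat -> R) (N k : nat) : 'M[R]_m :=
  \sum_(k <= j < N) mu j *: Amat phi j.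

Definition Bcoef m (phi : nat -> 'cV[R]_m) (j k : nat) : R :=
  \sum_(k <= l < j) (((phi j)^T *m phi l) 0 0) ^+ 2.

Definition mumax (mu : nat -> R) (N k : nat) : R :=
  \big[Num.max/0]_(k <= j < N) mu j.

Definition denom m (phi : nat -> 'cV[R]_m) (mu : nat -> R) (N k : nat) : R :=
  (Num.sqrt (mumax mu N k) + Num.sqrt (\sum_(k <= j < N) mu j * Bcoef phi j k)) ^+ 2.

End Defs.

(* Main.v *)
Require Import Defs.
From HB Require Import structures.
From mathcomp Require Import all_boot all_order all_algebra.
From mathcomp Require Import boolp classical_sets reals.
From mathcomp Require Import ring lra.
Import Order.TTheory GRing.Theory Num.Theory.
Set Implicit Arguments. Unset Strict Implicit.
Local Open Scope ring_scope.

Section Aux.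
Variable R : realType.

Lemma quad_cs (a b c : R) :
  (forall s t : R, 0 <= s ^+ 2 * a + 2 * s * t * b + t ^+ 2 * c) -> b ^+ 2 <= a * c.
Proof.
move=> H.
have h1 := H c (- b). have h2 := H b (- a). have h3 := H 1 0. have h4 := H 0 1.
have h5 := H 1 1. have h6 := H 1 (-1).
have ha : 0 <= a by move: h3; rewrite (_ : _ + _ = a) //; ring.
have hc : 0 <= c by move: h4; rewrite (_ : _ + _ = c) //; ring.
have e1 : 0 <= c * (a * c - b ^+ 2).
  by rewrite (_ : c * _ = c ^+ 2 * a + 2 * c * - b * b + (- b) ^+ 2 * c) //; ring.
have e2 : 0 <= a * (a * c - b ^+ 2).
  by rewrite (_ : a * _ = b ^+ 2 * a + 2 * b * - a * b + (- a) ^+ 2 * c) //; ring.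
case: (ltrP 0 c) => [cpos|c0].
  by rewrite -subr_ge0; rewrite pmulr_rge0 in e1.
case: (ltrP 0 a) => [apos|a0].
  by rewrite -subr_ge0; rewrite pmulr_rge0 in e2.
have -> : c = 0 by apply/eqP; rewrite eq_le c0 hc.
have -> : a = 0 by apply/eqP; rewrite eq_le a0 ha.
move: h5 h6; rewrite !expr1n; nra.
Qed.

Lemma wcs (I : Type) (r : seq I) (P : pred I) (w u v : I -> R) :
  (forall i, P i -> 0 <= w i) ->
  (\sum_(i <- r | P i) w i * u i * v i) ^+ 2 <=
  (\sum_(i <- r | P i) w i * u i ^+ 2) * (\sum_(i <- r | P i) w i * v i ^+ 2).
Proof.
move=> wge0; apply: quad_cs => s t.
have -> : s ^+ 2 * (\sum_(i <- r | P i) w i * u i ^+ 2) +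
  2 * s * t * (\sum_(i <- r | P i) w i * u i * v i) +
  t ^+ 2 * (\sum_(i <- r | P i) w i * v i ^+ 2) =
  \sum_(i <- r | P i) w i * (s * u i + t * v i) ^+ 2.
  rewrite !mulr_sumr -!big_split /=; apply: eq_bigr => i _; ring.
by apply: sumr_ge0 => i Pi; apply: mulr_ge0; [exact: wge0 | exact: sqr_ge0].
Qed.

Lemma cs (I : Type) (r : seq I) (P : pred I) (u v : I -> R) :
  (\sum_(i <- r | P i) u i * v i) ^+ 2 <=
  (\sum_(i <- r | P i) u i ^+ 2) * (\sum_(i <- r | P i) v i ^+ 2).
Proof.
have := @wcs I r P (fun=> 1) u v (fun _ _ => ler01).
by under eq_bigr do rewrite mul1r; under [X in _ <= X * _]eq_bigr do rewrite mul1r;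
   under [X in _ <= _ * X]eq_bigr do rewrite mul1r.
Qed.

End Aux.


Section Dot.
Variable R : realType.
Variable m : nat.
Implicit Types u v w x y : 'cV[R]_m.

Definition dot u v : R := \sum_i u i 0 * v i 0.

Lemma dotC u v : dot u v = dot v u.
Proof. by apply: eq_bigr => i _; rewrite mulrC. Qed.

Lemma dotDr u v w : dot u (v + w) = dot u v + dot u w.
Proof. by rewrite /dot -big_split; apply: eq_bigr => i _; rewrite mxE mulrDr. Qed.

Lemma dotZr a u v : dot u (a *: v) = a * dot u v.
Proof. by rewrite /dot mulr_sumr; apply: eq_bigr => i _; rewrite mxE mulrCA. Qed.

Lemma dotNr u v : dot u (- v) = - dot u v.
Proof. by rewrite -scaleN1r dotZr mulN1r. Qed.

Lemma dotBr u v w : dot u (v - w) = dot u v - dot u w.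
Proof. by rewrite dotDr dotNr. Qed.

Lemma dotDl u v w : dot (v + w) u = dot v u + dot w u.
Proof. by rewrite !(dotC _ u) dotDr. Qed.

Lemma dotZl a u v : dot (a *: v) u = a * dot v u.
Proof. by rewrite !(dotC _ u) dotZr. Qed.

Lemma dotBl u v w : dot (v - w) u = dot v u - dot w u.
Proof. by rewrite !(dotC _ u) dotBr. Qed.

Lemma dot0r u : dot u 0 = 0.
Proof. by rewrite /dot big1 // => i _; rewrite mxE mulr0. Qed.

Lemma dot_sumr (I : Type) (r : seq I) (P : pred I) (F : I -> 'cV[R]_m) u :
  dot u (\sum_(i <- r | P i) F i) = \sum_(i <- r | P i) dot u (F i).
Proof.
apply: (big_rec2 (fun a b => dot u b = a)); first by rewrite dot0r.
by move=> i a b _ <-; rewrite dotDr.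
Qed.

Lemma dot_ge0 u : 0 <= dot u u.
Proof. by apply: sumr_ge0 => i _; by rewrite -expr2; exact: sqr_ge0. Qed.

Lemma dot_eq0 u : dot u u = 0 -> u = 0.
Proof.
move=> /eqP; rewrite psumr_eq0 => [/allP H|i _]; last by rewrite -expr2; exact: sqr_ge0.
apply/matrixP => i j; rewrite (ord1 j) mxE.
by have /(_ (mem_index_enum i))/implyP/(_ isT) := H i; rewrite mulf_eq0 orbb => /eqP.
Qed.

Lemma dot_gt0 u : u != 0 -> 0 < dot u u.
Proof.
move=> u0; rewrite lt_def dot_ge0 andbT; apply/eqP => /dot_eq0 h.
by rewrite h eqxx in u0.
Qed.

Lemma dotE u v : (u^T *m v) 0 0 = dot u v.
Proof. by rewrite mxE; apply: eq_bigr => i _; rewrite mxE. Qed.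

Lemma quadE (M : 'M[R]_m) x : (x^T *m M *m x) 0 0 = dot x (M *m x).
Proof. by rewrite -mulmxA dotE. Qed.

Lemma dot_tr (A : 'M[R]_m) u v : dot u (A *m v) = dot (A^T *m u) v.
Proof. by rewrite -!dotE mulmxA trmx_mul trmxK. Qed.

Lemma rank1_mul u v : (u *m u^T) *m v = dot u v *: u.
Proof.
by rewrite -mulmxA [u^T *m v]mx11_scalar dotE mul_mx_scalar.
Qed.

Lemma vnorm2E u : vnorm2 u = Num.sqrt (dot u u).
Proof. by rewrite /vnorm2 /dot; congr Num.sqrt; apply: eq_bigr => i _; rewrite expr2. Qed.

Lemma dot_cs u v : dot u v ^+ 2 <= dot u u * dot v v.
Proof.
have := @cs R _ (index_enum 'I_m) xpredT (fun i => u i 0) (fun i => v i 0).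
by rewrite /dot; under [X in _ <= X * _]eq_bigr do rewrite expr2;
   under [X in _ <= _ * X]eq_bigr do rewrite expr2.
Qed.

Definition frob (A : 'M[R]_m) : R := \sum_i \sum_j A i j ^+ 2.

Lemma frob_ge0 A : 0 <= frob A.
Proof. by apply: sumr_ge0 => i _; apply: sumr_ge0 => j _; exact: sqr_ge0. Qed.

Lemma frob_bound A u : dot (A *m u) (A *m u) <= frob A * dot u u.
Proof.
rewrite /frob mulr_suml /dot; apply: ler_sum => i _.
rewrite mxE -expr2.
have := @cs R _ (index_enum 'I_m) xpredT (fun j => A i j) (fun j => u j 0).
by under [X in _ <= _ * X]eq_bigr do rewrite expr2.
Qed.

End Dot.


Section Ray.
Local Open Scope classical_set_scope.
Variable R : realType.
Variable m : nat.
Implicit Types u v w x y : 'cV[R]_m.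

Lemma psd_cs (T : 'M[R]_m) :
  (forall u v, dot u (T *m v) = dot (T *m u) v) ->
  (forall u, 0 <= dot u (T *m u)) ->
  forall u v, dot u (T *m v) ^+ 2 <= dot u (T *m u) * dot v (T *m v).
Proof.
move=> Ts Tp u v; apply: quad_cs => s t.
have := Tp (s *: u + t *: v).
rewrite mulmxDr -!scalemxAr !dotDl !dotDr !dotZl !dotZr.
have -> : dot v (T *m u) = dot u (T *m v) by rewrite Ts dotC.
by move=> h; apply: (le_trans h); rewrite le_eqVlt; apply/orP; left; apply/eqP; ring.
Qed.

Lemma eig_ge0 (M : 'M[R]_m) a : M^T = M -> (forall x, 0 <= dot x (M *m x)) ->
  eigenvalue M a -> 0 <= a.
Proof.
move=> MT Mp /eigenvalueP [v vM v0].
have Mw : M *m v^T = a *: v^T by rewrite -{1}MT -trmx_mul vM linearZ.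
have := Mp v^T; rewrite Mw dotZr.
have wpos : 0 < dot v^T v^T by apply: dot_gt0; rewrite trmx_eq0.
by rewrite pmulr_lge0.
Qed.

Lemma rayleigh (M : 'M[R]_m) : M^T = M -> (forall x, 0 <= dot x (M *m x)) ->
  forall x, dot x x = 1 -> lambda_min M <= dot x (M *m x).
Proof.
move=> MT Mp x x1.
have x0 : x != 0 by apply/eqP => h; move: x1; rewrite h /dot big1 => [|i _]; rewrite ?mxE ?mul0r //; move/eqP; rewrite eq_sym oner_eq0.
pose Q := [set dot y (M *m y) / dot y y | y in [set y : 'cV[R]_m | y != 0]].
have Qx : Q (dot x (M *m x)) by exists x => //; rewrite x1 divr1.
have Qlb : has_lbound Q.
  exists 0 => _ [y y0 <-]; apply: divr_ge0; [exact: Mp | exact: dot_ge0].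
have Qinf : has_inf Q by split => //; exists (dot x (M *m x)).
pose c := inf Q.
have hc : forall y, c * dot y y <= dot y (M *m y).
  move=> y; have [->|y0] := eqVneq y 0; first by rewrite !mulmx0 !dot0r mulr0.
  have Qy : Q (dot y (M *m y) / dot y y) by exists y.
  have := ge_inf Qlb Qy.
  by rewrite ler_pdivlMr ?dot_gt0.
have ceig : eigenvalue M c.
  rewrite /eigenvalue /eigenspace kermx_eq0 row_free_unit; apply/negP => Tu.
  pose T := M - c%:M.
  have TT : T^T = T by rewrite /T linearB /= tr_scalar_mx MT.
  have dotT y : dot y (T *m y) = dot y (M *m y) - c * dot y y.
    by rewrite /T mulmxBl mul_scalar_mx dotBr dotZr.
  have Tp y : 0 <= dot y (T *m y) by rewrite dotT subr_ge0.
  have Ts u v : dot u (T *m v) = dot (T *m u) v by rewrite dot_tr TT.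
  pose K := frob (invmx T). pose L := frob T.
  have K0 : 0 <= K := frob_ge0 _. have L0 : 0 <= L := frob_ge0 _.
  pose eps := (K ^+ 2 * L + 1)^-1.
  have epos : 0 < eps by rewrite invr_gt0; nra.
  have [e [y y0 <-] ey] := inf_adherent epos Qinf.
  have spos : 0 < dot y y by exact: dot_gt0.
  set s := dot y y in spos ey.
  set a := dot y (T *m y).
  have a0 : 0 <= a := Tp y.
  have aeps : a < eps * s.
    rewrite /a dotT -/s; move: ey; rewrite -/c ltr_pdivrMr // mulrDl; lra.
  set t := dot (T *m y) (T *m y).
  have t0 : 0 <= t := dot_ge0 _.
  have st : s <= K * t.
    have := frob_bound (invmx T) (T *m y); by rewrite mulKmx.
  have tab : t ^+ 2 <= a * dot (T *m y) (T *m (T *m y)).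
    by rewrite /t -Ts; apply: psd_cs.
  set b := dot (T *m y) (T *m (T *m y)) in tab.
  have b0 : 0 <= b := Tp _.
  have bL : b ^+ 2 <= L * t ^+ 2.
    apply: (le_trans (dot_cs _ _)); rewrite -/t.
    have := frob_bound T (T *m y); rewrite -/t -/L => h.
    by rewrite expr2 mulrA [L * t]mulrC -mulrA; apply: ler_wpM2l.
  have tpos : 0 < t by nra.
  have t2 : t ^+ 2 <= L * a ^+ 2.
    have h1 : t ^+ 4 <= a ^+ 2 * (L * t ^+ 2).
      have -> : t ^+ 4 = (t ^+ 2) ^+ 2 by rewrite -exprM.
      apply: (le_trans (y := (a * b) ^+ 2)).
        have ab0 : 0 <= a * b by exact: mulr_ge0.
        have t20 : 0 <= t ^+ 2 by exact: sqr_ge0.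
        move: tab ab0 t20; set p := t ^+ 2; set q := a * b; nra.
      by rewrite exprMn; apply: ler_wpM2l => //; exact: sqr_ge0.
    have t2pos : 0 < t ^+ 2 by rewrite exprn_gt0.
    rewrite -(ler_pM2r t2pos) -expr2 -exprM mulrAC.
    have -> : L * t ^+ 2 * a ^+ 2 = a ^+ 2 * (L * t ^+ 2) by ring.
    exact: h1.
  have s2 : s ^+ 2 <= K ^+ 2 * L * a ^+ 2.
    apply: (le_trans (y := K ^+ 2 * t ^+ 2)).
      rewrite -exprMn; have : 0 <= s by exact: ltW.
      move: st; set q := K * t; nra.
    by rewrite -mulrA; apply: ler_wpM2l => //; exact: sqr_ge0.
  have a2 : a ^+ 2 <= eps ^+ 2 * s ^+ 2.
    rewrite -exprMn; move: aeps a0; set q := eps * s; nra.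
  have eps1 : eps * (K ^+ 2 * L + 1) = 1 by rewrite mulVf //; apply: lt0r_neq0; nra.
  have KL : 0 <= K ^+ 2 * L by nra.
  have : s ^+ 2 <= K ^+ 2 * L * eps ^+ 2 * s ^+ 2.
    apply: (le_trans s2).
    have -> : K ^+ 2 * L * eps ^+ 2 * s ^+ 2 = K ^+ 2 * L * (eps ^+ 2 * s ^+ 2) by ring.
    by apply: ler_wpM2l.
  have s2pos : 0 < s ^+ 2 by rewrite exprn_gt0.
  set z := K ^+ 2 * L in eps1 KL *.
  have e1 : eps * z = 1 - eps by move: eps1; rewrite mulrDr mulr1 => <-; ring.
  have e2 : 0 <= eps * z by exact: mulr_ge0 (ltW epos) KL.
  have e3 : z * eps ^+ 2 <= z * eps.
    have e5 : eps <= 1 by move: e1 e2; lra.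
    have e6 : 0 <= z * eps by rewrite mulrC.
    rewrite expr2 mulrA -{2}[z * eps]mulr1; apply: ler_wpM2l => //.
  have e4 : z * eps ^+ 2 < 1 by move: e3 e1 epos; rewrite [z * eps]mulrC; lra.
  set w := z * eps ^+ 2 in e3 e4 *.
  move=> h; have : s ^+ 2 * w < s ^+ 2 * 1 by rewrite ltr_pM2l.
  by rewrite mulr1 mulrC; move: h; set p := s ^+ 2; lra.
have Elb : has_lbound [set a : R | eigenvalue M a].
  by exists 0 => a /= ha; exact: eig_ge0 ha.
apply: (le_trans (ge_inf Elb ceig)).
by have := hc x; rewrite x1 mulr1.
Qed.

End Ray.


Section Core.
Variable R : realType.

Lemma shift_sum (V : nmodType) (F : nat -> V) k N :
  \sum_(k <= j < N) F j = \sum_(0 <= d < N - k) F (k + d)%N.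
Proof. by rewrite -{1}[k]add0n big_addn; apply: eq_bigr => i _; rewrite addnC. Qed.

Lemma max_ub (mu : nat -> R) (r : seq nat) j : j \in r ->
  mu j <= \big[Num.max/0]_(i <- r) mu i.
Proof.
elim: r => [//|a r IH]; rewrite in_cons big_cons => /orP [/eqP ->|jr].
  by rewrite le_max lexx.
by rewrite le_max IH ?orbT.
Qed.

Lemma max_ge0 (mu : nat -> R) (r : seq nat) : 0 <= \big[Num.max/0]_(i <- r) mu i.
Proof. by elim: r => [|a r IH]; rewrite ?big_nil // big_cons le_max IH orbT. Qed.

Lemma sum_prefix (F : nat -> R) d n : (d <= n)%N -> (forall i, 0 <= F i) ->
  \sum_(0 <= i < d) F i <= \sum_(0 <= i < n) F i.
Proof.
move=> dn F0; rewrite (@big_cat_nat _ _ _ d 0 n) //  /= lerDl.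
by apply: sumr_ge0 => i _.
Qed.

End Core.


Section Core2.
Variable R : realType.

Lemma phi_le1 m (phi : nat -> 'cV[R]_m) n :
  psd (1%:M - Amat phi n) -> dot (phi n) (phi n) <= 1.
Proof.
move=> /(_ (phi n)); rewrite quadE mulmxBl mul1mx /Amat rank1_mul dotBr dotZr.
have := dot_ge0 (phi n); set p := dot _ _; nra.
Qed.

Lemma Smat_mul m (phi : nat -> 'cV[R]_m) mu N k x :
  dot x (Smat phi mu N k *m x) =
  \sum_(0 <= d < N - k) mu (k + d)%N * dot (phi (k + d)%N) x ^+ 2.
Proof.
rewrite /Smat shift_sum mulmx_suml dot_sumr; apply: eq_bigr => d _.
by rewrite -scalemxAl /Amat rank1_mul dotZr dotZr (dotC x) expr2 mulrA.
Qed.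

Lemma Smat_tr m (phi : nat -> 'cV[R]_m) mu N k : (Smat phi mu N k)^T = Smat phi mu N k.
Proof.
rewrite /Smat raddf_sum; apply: eq_bigr => j _.
by rewrite /Amat /= linearZ /= trmx_mul trmxK.
Qed.

End Core2.


Section Core3.
Variable R : realType.

Lemma core m (phi : nat -> 'cV[R]_m) (mu : nat -> R) N k x :
  (forall n, psd (1%:M - Amat phi n)) -> (forall j, 0 <= mu j) -> (k < N)%N ->
  0 < denom phi mu N k -> dot x x = 1 ->
  dot (Phi phi N k *m x) (Phi phi N k *m x) <=
    1 - lambda_min (Smat phi mu N k) / denom phi mu N k.
Proof.
move=> hA mu0 kN D0 x1.
set n := (N - k)%N.
pose y d := Phi_rec phi d k *m x.
pose e d := dot (phi (k + d)%N) (y d).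
have ystep d : y d.+1 = y d - e d *: phi (k + d)%N.
  by rewrite /y /= -mulmxA mulmxBl mul1mx /Amat rank1_mul.
have ynorm d : dot (y d.+1) (y d.+1) <= dot (y d) (y d) - e d ^+ 2.
  rewrite ystep dotBl !dotBr !dotZl !dotZr (dotC (y d) (phi _)) -/(e d).
  have := phi_le1 (hA (k + d)%N); set p := dot _ _; set Y := dot _ _; nra.
have ysum d : dot (y d) (y d) <= 1 - \sum_(0 <= i < d) e i ^+ 2.
  elim: d => [|d IH]; first by rewrite big_geq // subr0 /y /= mul1mx x1.
  rewrite big_nat_recr //=; apply: (le_trans (ynorm d)); lra.
have xdec d : x = y d + \sum_(0 <= l < d) e l *: phi (k + l)%N.
  elim: d => [|d IH]; first by rewrite big_geq // addr0 /y /= mul1mx.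
  by rewrite big_nat_recr //= ystep {1}IH addrACA addNr addr0.
have pdec d : dot (phi (k + d)%N) x =
    e d + \sum_(0 <= l < d) dot (phi (k + d)%N) (phi (k + l)%N) * e l.
  rewrite {1}(xdec d) dotDr dot_sumr; congr (_ + _).
  by apply: eq_bigr => l _; rewrite dotZr mulrC.
set E := \sum_(0 <= d < n) e d ^+ 2.
have E0 : 0 <= E by apply: sumr_ge0 => i _; exact: sqr_ge0.
set S := Smat phi mu N k.
set D := denom phi mu N k.
have key : dot x (S *m x) <= D * E.
  rewrite Smat_mul -/n.
  pose w d := mu (k + d)%N.
  pose f d := \sum_(0 <= l < d) dot (phi (k + d)%N) (phi (k + l)%N) * e l.
  pose Bd d := \sum_(0 <= l < d) dot (phi (k + d)%N) (phi (k + l)%N) ^+ 2.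
  under eq_bigr do rewrite pdec.
  set a := \sum_(0 <= d < n) w d * e d ^+ 2.
  set b := \sum_(0 <= d < n) w d * f d ^+ 2.
  set c := \sum_(0 <= d < n) w d * e d * f d.
  have -> : \sum_(0 <= d < n) mu (k + d)%N * (e d + f d) ^+ 2 = a + 2 * c + b.
    rewrite /a /b /c mulr_sumr -!big_split /=; apply: eq_bigr => i _; rewrite /w; ring.
  have a0 : 0 <= a by apply: sumr_ge0 => i _; apply: mulr_ge0; [exact: mu0 | exact: sqr_ge0].
  have b0 : 0 <= b by apply: sumr_ge0 => i _; apply: mulr_ge0; [exact: mu0 | exact: sqr_ge0].
  have cab : c <= Num.sqrt a * Num.sqrt b.
    rewrite -sqrtrM //; apply: (le_trans (ler_norm c)); rewrite -sqrtr_sqr.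
    by apply: ler_wsqrtr; apply: wcs => i _; exact: mu0.
  set M := mumax mu N k.
  have M0 : 0 <= M by exact: max_ge0.
  have aM : a <= M * E.
    rewrite /E mulr_sumr; apply: ler_sum_nat => i /andP [_ hi].
    apply: ler_wpM2r; first exact: sqr_ge0.
    rewrite /w /M /mumax; apply: max_ub; rewrite mem_index_iota leq_addr /=; by rewrite -ltn_subRL.
  set P := \sum_(k <= j < N) mu j * Bcoef phi j k.
  have PE : P = \sum_(0 <= d < n) w d * Bd d.
    rewrite /P shift_sum; apply: eq_bigr => d _; congr (_ * _).
    rewrite /Bcoef shift_sum addKn; apply: eq_bigr => l _; by rewrite dotE.
  have P0 : 0 <= P.
    rewrite PE; apply: sumr_ge0 => i _; apply: mulr_ge0; first exact: mu0.
    by rewrite /Bd; apply: sumr_ge0 => l _; exact: sqr_ge0.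
  have bP : b <= P * E.
    rewrite PE mulr_suml; apply: ler_sum_nat => i /andP [_ hi].
    rewrite -mulrA; apply: ler_wpM2l; first exact: mu0.
    rewrite /f /Bd; apply: (le_trans (cs _ _ _ _)); apply: ler_wpM2l.
      by apply: sumr_ge0 => l _; exact: sqr_ge0.
    by apply: sum_prefix => [|j]; [exact: ltnW | exact: sqr_ge0].
  have sa : Num.sqrt a <= Num.sqrt M * Num.sqrt E by rewrite -sqrtrM // ler_wsqrtr.
  have sb : Num.sqrt b <= Num.sqrt P * Num.sqrt E by rewrite -sqrtrM // ler_wsqrtr.
  have -> : D * E = (Num.sqrt M * Num.sqrt E + Num.sqrt P * Num.sqrt E) ^+ 2.
    by rewrite /D /denom -/M -/P -mulrDl exprMn sqr_sqrtr.
  have ha := sqr_sqrtr a0. have hb := sqr_sqrtr b0.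
  have sa0 := sqrtr_ge0 a. have sb0 := sqrtr_ge0 b.
  move: cab sa sb ha hb sa0 sb0.
  set A := Num.sqrt a; set B := Num.sqrt b; set U := Num.sqrt M * Num.sqrt E;
  set V := Num.sqrt P * Num.sqrt E.
  nra.
have lam : lambda_min S <= dot x (S *m x).
  apply: rayleigh => //; first exact: Smat_tr.
  by move=> z; rewrite Smat_mul; apply: sumr_ge0 => i _; apply: mulr_ge0 => //; exact: sqr_ge0.
have -> : Phi phi N k *m x = y n by [].
apply: (le_trans (ysum n)); rewrite lerD2l lerN2 ler_pdivrMr // mulrC.
by apply: (le_trans lam).
Qed.

End Core3.

Unset Implicit Arguments. Set Strict Implicit.

Theorem mainTheorem1 (R : realType) (m : nat) (phi : nat -> 'cV[R]_m)
  (mu : nat -> R) (N k : nat) :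
  (0 < m)%N ->
  (forall n, psd (Amat phi n) /\ psd (1%:M - Amat phi n)) ->
  (forall j, 0 <= mu j) ->
  (k < N)%N ->
  denom phi mu N k != 0 ->
  specnorm (Phi phi N k) ^+ 2 <= 1 - lambda_min (Smat phi mu N k) / denom phi mu N k.
Proof.
move=> m0 hA mu0 kN Dn0.
have hA' n : psd (1%:M - Amat phi n) by case: (hA n).
have D0 : 0 < denom phi mu N k by rewrite lt_def Dn0 /denom sqr_ge0.
set b := 1 - _.
set P := Phi phi N k.
have unit_of : forall x : 'cV[R]_m, vnorm2 x = 1 -> dot x x = 1.
  by move=> x; rewrite vnorm2E => h; rewrite -(sqr_sqrtr (dot_ge0 x)) h expr1n.
pose v : 'cV[R]_m := const_mx 1.
have v0 : v != 0.
  apply/eqP => /matrixP/(_ (Ordinal m0) 0); rewrite !mxE => /eqP; by rewrite oner_eq0.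
have vpos := dot_gt0 v0.
pose x0 := (Num.sqrt (dot v v))^-1 *: v.
have sq0 : 0 < Num.sqrt (dot v v) by rewrite sqrtr_gt0.
have x01 : vnorm2 x0 = 1.
  rewrite vnorm2E /x0 dotZl dotZr mulrA -expr2 exprVn sqr_sqrtr ?ltW // mulVf ?sqrtr1 //.
  exact: lt0r_neq0.
have bnd : forall x : 'cV[R]_m, vnorm2 x = 1 -> vnorm2 (P *m x) <= Num.sqrt b.
  move=> x /unit_of x1; rewrite vnorm2E ler_wsqrtr //; exact: core.
have b0 : 0 <= b.
  have := core hA' mu0 kN D0 (unit_of _ x01).
  by apply: le_trans; exact: dot_ge0.
set V := [set vnorm2 (P *m x) | x in [set x : 'cV[R]_m | vnorm2 x = 1]]%classic.
have Vx0 : V (vnorm2 (P *m x0)) by exists x0.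
have Vub : (ubound V) (Num.sqrt b) by move=> _ [x hx <-]; exact: bnd.
have hs : specnorm P <= Num.sqrt b by apply: ge_sup => //; exists (vnorm2 (P *m x0)).
have hs0 : 0 <= specnorm P.
  apply: le_trans (sup_upper_bound _ Vx0); first by rewrite vnorm2E sqrtr_ge0.
  by split; [exists (vnorm2 (P *m x0)) | exists (Num.sqrt b)].
rewrite -(sqr_sqrtr b0).
move: hs hs0; set s := specnorm P; set r := Num.sqrt b; nra.
Qed.
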